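(* Let $\rho$ be a function quasi-norm over a $\sigma$-finite measure space $(\Omega,\Sigma,\mu)$, let $X$ be a quasi-Banach space, and let $(x_n)_{n=1}^\infty$ be a sequence of measurable functions $\Omega\to X$ such that $\lim_n\rho(\|x_n(\cdot)-x(\cdot)\|)=0$ for some measurable $x\colon\Omega\to X$. Then there is a subsequence $(y_n)_{n=1}^\infty$ of $(x_n)_{n=1}^\infty$ with $\lim_ny_n=x$ a.e.
   Context: $L_0^+(\mu)$: measurable functions $\Omega\to[0,\infty]$ modulo a.e. equality; $\Sigma(\mu)=\{E\in\Sigma:\mu(E)<\infty\}$. A function quasi-norm over $(\Omega,\Sigma,\mu)$ is $\rho\colon L_0^+(\mu)\to[0,\infty]$ with (F1) $\rho(tf)=t\rho(f)$ for $t\ge0$; (F2) $f\le g$ a.e. $\Rightarrow\rho(f)\le\rho(g)$; (F3) $\rho(\chi_E)<\infty$ for $E\in\Sigma(\mu)$; (F4) for all $E\in\Sigma(\mu)$, $\varepsilon>0$ there is $\delta>0$ such that $\mu(A)\le\varepsilon$ whenever $A\in\Sigma$, $A\subseteq E$, $\rho(\chi_A)\le\delta$; (F5) there is $\kappa$ with $\rho(f+g)\le\kappa(\rho(f)+\rho(g))$. *)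

(* Defs.v *)
From HB Require Import structures.
From mathcomp Require Import all_boot all_order all_algebra.
From mathcomp Require Import all_classical all_reals all_analysis.
From mathcomp Require Import lebesgue_measure measurable_realfun.
Set Implicit Arguments. Unset Strict Implicit. Unset Printing Implicit Defensive.
Import Order.TTheory GRing.Theory Num.Theory.
Import numFieldNormedType.Exports.
Local Open Scope classical_set_scope.
Local Open Scope ring_scope.

Section Defs.
Context {d : measure_display} {T : measurableType d} {R : realType}.

(* representatives of elements of L_0^+(mu): measurable [0,oo]-valued functions *)
Definition L0p (f : T -> \bar R) : Prop :=
  measurable_fun setT f /\ (forall t, (0 <= f t)%E).

Definition chi (A : set T) : T -> \bar R := fun t => (\1_A t)%:E.

Definition function_quasinorm (mu : {measure set T -> \bar R})
  (rho : (T -> \bar R) -> \bar R) : Prop :=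
  (* well defined on a.e.-classes *)
  (forall f g, L0p f -> L0p g -> {ae mu, forall t, f t = g t} -> rho f = rho g) /\
  (forall (c : R) f, 0 <= c -> L0p f -> rho (fun t => c%:E * f t)%E = (c%:E * rho f)%E) /\
  (forall f g, L0p f -> L0p g -> {ae mu, forall t, (f t <= g t)%E} -> (rho f <= rho g)%E) /\
  (forall E, measurable E -> (mu E < +oo)%E -> (rho (chi E) < +oo)%E) /\
  (forall E, measurable E -> (mu E < +oo)%E -> forall eps : R, 0 < eps ->
     exists2 delta : R, 0 < delta &
       forall A, measurable A -> A `<=` E -> (rho (chi A) <= delta%:E)%E ->
         (mu A <= eps%:E)%E) /\
  (exists kappa : R, forall f g, L0p f -> L0p g ->
     (rho (fun t => f t + g t)%E <= kappa%:E * (rho f + rho g))%E).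

End Defs.

Definition quasi_banach (R : realType) (X : lmodType R) (nrm : X -> R) : Prop :=
  (forall x, 0 <= nrm x) /\
  (forall x, nrm x = 0 -> x = 0) /\
  (forall (a : R) x, nrm (a *: x) = `|a| * nrm x) /\
  (exists k : R, forall x y, nrm (x + y) <= k * (nrm x + nrm y)) /\
  (forall u : nat -> X,
     (forall e : R, 0 < e -> exists N : nat, forall m n, (N <= m)%N -> (N <= n)%N ->
        nrm (u m - u n) < e) ->
     exists l : X, (fun n => nrm (u n - l)) @ \oo --> (0 : R)).

Section Meas.
Context {d : measure_display} {T : measurableType d} {R : realType}.

Definition simple_fun (X : Type) (s : T -> X) : Prop :=
  finite_set (range s) /\ forall y : X, measurable (s @^-1` [set y]).

(* measurable (= strongly measurable) X-valued functions: a.e. limits of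
   simple functions in the quasi-norm of X *)
Definition strongly_measurable (mu : {measure set T -> \bar R})
  (X : lmodType R) (nrm : X -> R) (f : T -> X) : Prop :=
  exists s : nat -> T -> X, (forall k, simple_fun (s k)) /\
    {ae mu, forall t, (fun k => nrm (s k t - f t)) @ \oo --> (0 : R)}.
End Meas.

(* Main.v *)
Set Warnings "-all".
Require Import Defs.
From HB Require Import structures.
From mathcomp Require Import all_boot all_order all_algebra.
From mathcomp Require Import all_classical all_reals all_analysis.
From mathcomp Require Import lebesgue_measure measurable_realfun.
Import Order.TTheory GRing.Theory Num.Theory.
Import numFieldNormedType.Exports.
Local Open Scope classical_set_scope.
Local Open Scope ring_scope.
Lemma in_measure (d : measure_display) (T : measurableType d) (R : realType)
  (mu : {measure set T -> \bar R}) (rho : (T -> \bar R) -> \bar R)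
  (g : nat -> T -> \bar R) :
  function_quasinorm mu rho -> (forall n, L0p (g n)) ->
  (fun n => rho (g n)) @ \oo --> 0%E ->
  forall E, measurable E -> (mu E < +oo)%E -> forall eps : R, 0 < eps ->
  exists N, forall n, (N <= n)%N ->
    (mu (E `&` [set t | (eps%:E < g n t)%E]) <= eps%:E)%E.
Proof.
move=> [_ [F1 [F2 [_ [F4 _]]]]] Lg rho0 E mE muE eps eps0.
have [delta delta0 Hd] := F4 E mE muE eps eps0.
have ed0 : 0 < eps * delta by rewrite mulr_gt0.
have := rho0 _ (@nbhs_open_ereal_lt R 0 (fun _ => eps * delta) ed0).
move=> [N _ HN]; exists N => n Nn.
have HA : measurable (E `&` [set t | (eps%:E < g n t)%E]).
  have := @measurable_lte _ T R E mE (fun=> eps%:E) (g n) (measurable_cst _)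
    (measurable_funS measurableT (@subsetT _ E) (Lg n).1).
  by [].
apply: Hd; [exact: HA|by move=> t []|].
have Lc : L0p (chi (E `&` [set t | (eps%:E < g n t)%E]) : T -> \bar R).
  split; last by move=> t; rewrite /chi lee_fin indicE ler0n.
  by apply/measurable_EFinP; exact: measurable_indic.
have Lc' : L0p (fun t => eps%:E * chi (E `&` [set t | (eps%:E < g n t)%E]) t)%E.
  split; last by move=> t; rewrite mule_ge0 // ?lee_fin ?(ltW eps0) //; case: Lc => _; apply.
  by apply: emeasurable_funM => //; case: Lc.
have Hpt : forall t, ((fun t => eps%:E * chi (E `&` [set t | (eps%:E < g n t)%E]) t) t <= g n t)%E.
  move=> t; rewrite /chi indicE /=; case: (boolP (t \in _)) => Ht.
    by move: Ht; rewrite inE => -[_ /= /ltW]; rewrite mule1.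
  by rewrite mule0; case: (Lg n) => _; apply.
have le1 := F2 _ _ Lc' (Lg n) (aeW mu Hpt).
rewrite F1 in le1; [|exact: ltW|exact: Lc].
have : (eps%:E * rho (chi (E `&` [set t | (eps%:E < g n t)%E])) < eps%:E * delta%:E)%E.
  by apply: (le_lt_trans le1); rewrite -EFinM; exact: HN.
by rewrite lte_pmul2l // => /ltW.
Qed.
Lemma geo_sum (R : realType) :
  (\sum_(k <oo) ((geometric (2^-1) (2^-1) k : R)%:E) < +oo)%E.
Proof.
have z1 : `|2^-1 : R| < 1.
  by rewrite ger0_norm ?invr_ge0 // invf_lt1 // ltr1n.
have h := @cvg_geometric_series R (2^-1) _ z1.
rewrite (_ : (\sum_(k <oo) _)%E = ((2^-1)/(1-2^-1) : R)%:E) ?ltry //.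
apply: cvg_lim => //.
rewrite [X in X @ _ --> _](_ : _ = fun n => (series (geometric (2^-1) (2^-1 : R)) n)%:E); last first.
  by apply/funext => n; rewrite /= sumEFin.
by apply: cvg_comp h _; exact: cvg_id.
Qed.

Theorem proposition3p13 (d : measure_display) (T : measurableType d) (R : realType)
  (mu : {measure set T -> \bar R}) (rho : (T -> \bar R) -> \bar R)
  (X : lmodType R) (nrm : X -> R) (xs : nat -> T -> X) (x : T -> X) :
  sigma_finite setT mu ->
  function_quasinorm mu rho ->
  quasi_banach nrm ->
  (forall n, strongly_measurable mu nrm (xs n)) ->
  strongly_measurable mu nrm x ->
  (exists g : nat -> T -> \bar R,
     (forall n, L0p (g n)) /\
     (forall n, {ae mu, forall t, g n t = (nrm (xs n t - x t))%:E}) /\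
     (fun n => rho (g n)) @ \oo --> 0%E) ->
  exists phi : nat -> nat, {homo phi : m n / (m < n)%N} /\
    {ae mu, forall t, (fun n => nrm (xs (phi n) t - x t)) @ \oo --> (0 : R)}.
Proof.
move=> [F FT Fm] fq _ _ _ [g [Lg [Hg rho0]]].
pose e k : R := geometric (2^-1) (2^-1) k.
have z1 : `|2^-1 : R| < 1.
  by rewrite ger0_norm ?invr_ge0 // invf_lt1 // ltr1n.
have e0 k : 0 < e k by rewrite /e /geometric /= mulr_gt0 // exprn_gt0.
have HN i k : {N | forall n, (N <= n)%N ->
    (mu (F i `&` [set t | ((e k)%:E < g n t)%E]) <= (e k)%:E)%E}.
  exact: (cid (@in_measure _ _ _ mu rho g fq Lg rho0 _ (Fm i).1 (Fm i).2 _ (e0 k))).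
pose N i k := proj1_sig (HN i k).
pose M k := (\max_(i < k.+1) N i k)%N.
pose phi k := (\sum_(j < k.+1) (M j).+1)%N.
have phiS k : (phi k < phi k.+1)%N.
  by rewrite /phi [X in (_ < X)%N]big_ord_recr /= -[X in (X < _)%N]addn0 ltn_add2l.
have phiN i k : (i <= k)%N -> (N i k <= phi k)%N.
  move=> ik; apply: (@leq_trans (M k)).
    exact: (@leq_bigmax _ (fun j : 'I_k.+1 => N j k) (Ordinal (ik : (i < k.+1)%N))).
  by rewrite /phi big_ord_recr /=; apply: leq_trans (leqnSn _) (leq_addl _ _).
pose B i k := if (i <= k)%N then F i `&` [set t | ((e k)%:E < g (phi k) t)%E] else set0.
have mB i k : measurable (B i k).
  rewrite /B; case: ifP => _ //.
  exact: (measurable_lte (Fm i).1 (measurable_cst _)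
    (measurable_funS measurableT (@subsetT _ _) (Lg _).1)).
have muB i k : (mu (B i k) <= (e k)%:E)%E.
  rewrite /B; case: ifP => ik.
    exact: (proj2_sig (HN i k)) (phiN i k ik).
  by rewrite measure0 lee_fin ltW.
have null i : mu (lim_sup_set (B i)) = 0%E.
  apply: lim_sup_set_cvg0 => //.
  apply: le_lt_trans (geo_sum R).
  by apply: lee_nneseries => // n _ _.
have mL i : measurable (lim_sup_set (B i)).
  apply: bigcapT_measurable => n.
  by apply: bigcup_measurable => j _.
have ae1 : \forall t \ae mu, forall i, ~ lim_sup_set (B i) t.
  apply: ae_foralln => i; exists (lim_sup_set (B i)); split => //.
  by move=> t /=; case: (pselect (lim_sup_set (B i) t)).
have ae2 := ae_foralln (fun n => Hg (phi n)).
exists phi; split; first exact: homo_ltn (@ltn_trans) phiS.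
apply: filterS2 ae1 ae2 => t H1 H2.
have [i _ Fit] : (\bigcup_i F i) t by rewrite -FT.
have [m Hm] : exists m, forall j, (m <= j)%N -> ~ B i j t.
  have := H1 i; rewrite /lim_sup_set => /existsNP [m Hm]; exists m => j mj Bj.
  by apply: Hm => _; exists j.
apply: (@squeeze_cvgr _ _ _ R (fun=> 0) e); last exact: cvg_geometric.
  exists (maxn m i) => // k /= mk.
  have ik : (i <= k)%N by apply: leq_trans mk; exact: leq_maxr.
  have mk' : (m <= k)%N by apply: leq_trans mk; exact: leq_maxl.
  have nB := Hm k mk'; rewrite /B ik in nB.
  have : ~ ((e k)%:E < g (phi k) t)%E by move=> h; apply: nB; split.
  move/negP; rewrite -leNgt H2 lee_fin => le.
  have := (Lg (phi k)).2 t; rewrite H2 lee_fin => ge.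
  by rewrite ge le.
exact: cvg_cst.
Qed.
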